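(* Let $1\le l\le k-1$ and $3\le t_1\le\cdots\le t_k$. Then $$S^{(k-l+1)}(t_{l+1},\dots,t_k)\le(\log2)^{-l}S^{(k+1)}(t_1,\dots,t_k)$$ and $S^{(k+1)}(t_1,\dots,t_k)\gg_k\log t_k$.
   Context: For $m\ge1$ and $1\le s_1\le\cdots\le s_m$, with $s_0=1$, let $\mathscr{P}_*^m(\mathbf{s})=\{\mathbf{a}\in\mathbb{N}^m: a_i\in\mathscr{P}_*(s_{i-1},s_i)\ (1\le i\le m)\}$, where $\mathscr{P}_*(y,z)$ is the set of squarefree positive integers with all prime factors in $(y,z]$. $L^{(m+1)}(\mathbf{a})$ is the $m$-dimensional Lebesgue measure of $\bigcup[\log(d_1/2),\log d_1)\times\cdots\times[\log(d_m/2),\log d_m)$ over all $(d_1,\dots,d_m)\in\mathbb{N}^m$ with $d_1\cdots d_i\mid a_1\cdots a_i$ for all $1\le i\le m$. $S^{(m+1)}(\mathbf{s})=\sum_{\mathbf{a}\in\mathscr{P}_*^m(\mathbf{s})}L^{(m+1)}(\mathbf{a})/(a_1\cdots a_m)$. *)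

(* Defs.v *)
From HB Require Import structures.
From mathcomp Require Import all_boot all_order all_algebra.
From mathcomp Require Import all_classical all_reals all_analysis.
Set Implicit Arguments. Unset Strict Implicit. Unset Printing Implicit Defensive.
Import Order.TTheory GRing.Theory Num.Theory.
Local Open Scope classical_set_scope.
Local Open Scope ring_scope.

Section Defs.
Variable R : realType.

Definition squarefree (n : nat) : bool :=
  (0 < n)%N && all (fun p => logn p n <= 1)%N (primes n).

Definition Pstar (y z : R) (n : nat) : bool :=
  squarefree n && all (fun p => (y < p%:R) && (p%:R <= z)) (primes n).

(* P_*^m(s) with s = [:: s_1; ...; s_m] and the convention s_0 = 1 *)
Definition Pstar_m (s : seq R) : set (seq nat) :=
  [set a | size a = size s /\
     forall i, (i < size s)%N -> Pstar (nth 1 (1 :: s) i) (nth 0 s i) (nth 0%N a i)].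

(* m-dimensional Lebesgue measure of a set A of points of R^m (points are
   sequences of length m), computed as the iterated Lebesgue integral of the
   indicator function of A (Fubini/Tonelli). *)
Fixpoint vol (m : nat) (A : seq R -> Prop) : \bar R :=
  match m with
  | 0 => (if pselect (A [::]) then 1 else 0)%E
  | m'.+1 => (\int[@lebesgue_measure R]_x vol m' (fun v => A (x :: v)))%E
  end.

Definition Lset (a : seq nat) : seq R -> Prop :=
  fun x => size x = size a /\
    exists d : seq nat, [/\ size d = size a, all (fun di => 0 < di)%N d,
      (forall i, (i < size a)%N ->
         (\prod_(e <- take i.+1 d) e) %| (\prod_(e <- take i.+1 a) e))%N &
      forall i, (i < size a)%N ->
         ln ((nth 0%N d i)%:R / 2) <= nth 0 x i /\ nth 0 x i < ln (nth 0%N d i)%:R].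

Definition Lm (a : seq nat) : \bar R := vol (size a) (Lset a).

Definition Sm (s : seq R) : \bar R :=
  (\esum_(a in Pstar_m s) (Lm a * ((\prod_(e <- a) e)%:R^-1)%:E))%E.

End Defs.

(* Main.v *)
Require Import Defs.
From HB Require Import structures.
From mathcomp Require Import all_boot all_order all_algebra zify ring lra.
From mathcomp Require Import all_classical all_reals all_analysis.
Set Implicit Arguments. Unset Strict Implicit. Unset Printing Implicit Defensive.
Import Order.TTheory GRing.Theory Num.Theory.
Local Open Scope classical_set_scope.
Local Open Scope ring_scope.


Section V.
Variable R : realType.
Local Open Scope ereal_scope.

Lemma int_mono (f g : R -> \bar R) : (forall x, 0 <= f x) -> (forall x, f x <= g x) ->
  \int[@lebesgue_measure R]_x f x <= \int[@lebesgue_measure R]_x g x.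
Proof.
move=> f0 fg.
have g0 x : 0 <= g x by exact: le_trans (f0 x) (fg x).
rewrite !ge0_integralE // !patch_setT.
apply: ereal_sup_le => y [h hf <-]; exists h => //= x.
exact: le_trans (hf x) (fg x).
Qed.

Lemma vol_ge0 m (A : seq R -> Prop) : 0 <= vol m A.
Proof.
elim: m A => [|m IH] A /=; first by case: pselect.
by apply: integral_ge0 => x _; exact: IH.
Qed.

Lemma vol_mono m (A B : seq R -> Prop) : (forall v, A v -> B v) -> vol m A <= vol m B.
Proof.
elim: m A B => [|m IH] A B AB /=.
  case: pselect => a; case: pselect => b //; first by case: (b (AB _ a)).
  by rewrite lee01.
apply: int_mono => x; first exact: vol_ge0.
by apply: IH => v; exact: AB.
Qed.

Lemma vol_empty m : vol m (fun _ : seq R => False) = 0.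
Proof.
elim: m => [|m IH] /=; first by case: pselect.
by rewrite IH integral0.
Qed.

Definition Iv : set R := [set` `[- ln (2:R), 0[%R].

Fixpoint Pbox (l : nat) (B : seq R -> Prop) (x : seq R) : Prop :=
  match l with
  | 0%N => B x
  | l'.+1 => match x with [::] => False | h :: x' => Iv h /\ Pbox l' B x' end
  end.

Lemma vol_and n (A : seq R -> Prop) x :
  vol n (fun v => Iv x /\ A v) = ((cst (vol n A)) \_ Iv) x.
Proof.
rewrite /patch; case: ifPn => [/set_mem Ix | /negP Ix].
  by congr vol; apply/funext => v; apply/propext; split => [[]|] .
rewrite [RHS](_ : _ = 0) // -(vol_empty n); congr vol; apply/funext => v; apply/propext; split => // [[]] /mem_set.
by [].
Qed.

Lemma ln2_gt0 : (0 < ln (2:R))%R.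
Proof. by apply: ln_gt0; rewrite ltr1n. Qed.

Lemma mIv : (@lebesgue_measure R) Iv = (ln (2:R))%:E.
Proof.
by rewrite /Iv lebesgue_measure_itv /= lte_fin oppr_lt0 ln2_gt0 /= add0e opprK.
Qed.

Lemma vol_Pbox l m (B : seq R -> Prop) :
  vol (l + m) (Pbox l B) = ((ln (2:R)) ^+ l)%:E * vol m B.
Proof.
elim: l => [|l IH]; first by rewrite expr0 mul1e.
rewrite addSn /=.
under eq_integral do rewrite vol_and.
rewrite -integral_mkcond integral_cst; last exact: measurable_itv.
rewrite [X in _ * X = _](_ : _ = (ln (2:R))%:E); last exact: mIv.
rewrite IH.
by rewrite muleAC -EFinM -exprSr.
Qed.

End V.


Section L.
Variable R : realType.

Lemma Pbox_split l (B : seq R -> Prop) (x : seq R) : Pbox l B x -> exists y z, [/\ x = y ++ z, size y = l,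
  (forall i, (i < l)%N -> Iv (nth 0 y i)) & B z].
Proof.
elim: l x => [|l IH] [|h x] //=.
- by move=> Bx; exists [::], [::].
- by move=> Bx; exists [::], (h :: x).
move=> [Ih /IH [y [z [-> sy Iy Bz]]]]; exists (h :: y), z; split => //=.
  by rewrite sy.
by case=> [|i] //= /Iy.
Qed.

Lemma prod_take_nseq l (d : seq nat) n :
  (\prod_(e <- take n (nseq l 1%N ++ d)) e = \prod_(e <- take (n - l) d) e)%N.
Proof.
elim: l n => [|l IH] n; first by rewrite subn0.
case: n => [|n]; first by rewrite sub0n !take0.
by rewrite /= big_cons IH mul1n subSS.
Qed.

Lemma Lset_sub l (a b : seq nat) (x : seq R) : size b = (l + size a)%N ->
  (forall j, (j < size a)%N ->
     (\prod_(e <- take j.+1 a) e) %| (\prod_(e <- take (l+j).+1 b) e))%N ->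
  Pbox l (Lset a) x -> Lset b x.
Proof.
move=> sb dv /Pbox_split [y [z [-> sy Iy [sz [d [sd pd dd id]]]]]].
split; first by rewrite size_cat sy sz sb.
exists (nseq l 1%N ++ d); split.
- by rewrite size_cat size_nseq sd sb.
- by rewrite all_cat pd andbT all_nseq orbT.
- move=> i; rewrite sb => ilt; rewrite prod_take_nseq.
  case: (ltnP i l) => il.
    have -> : (i.+1 - l = 0)%N by apply/eqP; rewrite subn_eq0.
    by rewrite take0 big_nil dvd1n.
  have [j ij] : exists j, i = (l + j)%N by exists (i - l)%N; rewrite subnKC.
  subst i.
  have jlt : (j < size a)%N by rewrite -(ltn_add2l l).
  have -> : ((l + j).+1 - l = j.+1)%N by rewrite subSn ?leq_addr // addKn.
  apply: dvdn_trans (dd _ jlt) (dv _ jlt).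
- move=> i; rewrite sb => ilt.
  rewrite !nth_cat size_nseq sy; case: ifPn => il.
    rewrite nth_nseq il mul1r ln1 lnV ?posrE //.
    by move: (Iy _ il); rewrite /Iv /= in_itv /= => /andP [].
  have lt : (i - l < size a)%N by rewrite ltn_subLR // leqNgt.
  exact: id.
Qed.
End L.


Lemma sqfree_dvd d n : (0 < d)%N -> (d %| n)%N -> squarefree n -> squarefree d.
Proof.
rewrite /squarefree => d0 dn /andP [n0 /allP H]; rewrite d0 /=; apply/allP => p pd.
have pn : p \in primes n.
  move: pd; rewrite !mem_primes => /and3P [pp _ pdd].
  by rewrite pp n0 (dvdn_trans pdd dn).
exact: leq_trans (dvdn_leq_log p n0 dn) (H p pn).
Qed.

Section N.
Variable R : realType.

Definition lepi (t : R) : nat_pred := [pred p : nat | (p%:R <= t)].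

Fixpoint splitn (ts : seq R) (n : nat) : seq nat :=
  match ts with
  | [::] => [:: n]
  | t :: ts' => (partn n (lepi t)) :: splitn ts' ((partn n (negn (lepi t))))
  end.

Lemma Pstar_partL (y z t : R) n : Pstar y z n -> Pstar y t (partn n (lepi t)).
Proof.
rewrite /Pstar => /andP [sq /allP H]; apply/andP; split.
  by apply: sqfree_dvd sq; [exact: part_gt0 | exact: dvdn_part].
apply/allP => p; rewrite primes_part mem_filter => /andP [pt pn].
have /andP [yp _] := H p pn.
by rewrite yp; move: pt; rewrite inE.
Qed.

Lemma Pstar_partR (y z t : R) n : Pstar y z n -> Pstar t z (partn n (negn (lepi t))).
Proof.
rewrite /Pstar => /andP [sq /allP H]; apply/andP; split.
  by apply: sqfree_dvd sq; [exact: part_gt0 | exact: dvdn_part].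
apply/allP => p; rewrite primes_part mem_filter => /andP [pt pn].
have /andP [_ pz] := H p pn.
by rewrite pz andbT; move: pt; rewrite !inE -real_ltNge ?num_real.
Qed.

Lemma size_splitn ts n : size (splitn ts n) = (size ts).+1.
Proof. by elim: ts n => [|t ts IH] n //=; rewrite IH. Qed.

Lemma prod_splitn ts n : (0 < n)%N -> (\prod_(e <- splitn ts n) e)%N = n.
Proof.
elim: ts n => [|t ts IH] n n0 /=; first by rewrite big_seq1.
by rewrite big_cons IH ?part_gt0 // partnC.
Qed.

Lemma Pstar_splitn ts (y z : R) n : Pstar y z n -> forall i, (i < (size ts).+1)%N ->
  Pstar (nth y (y :: ts) i) (nth z (rcons ts z) i) (nth 0%N (splitn ts n) i).
Proof.
elim: ts y n => [|t ts IH] y n Pn [|i] //=.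

- move=> _; exact: (Pstar_partL t Pn).
- rewrite ltnS => ilt.
  have := IH t _ (Pstar_partR t Pn) i ilt.
  by rewrite (set_nth_default t y) //.
Qed.
End N.



Section S.
Variable R : realType.

Definition sp (t1 : seq R) (a : seq nat) : seq nat := splitn t1 (head 0%N a) ++ behead a.

Lemma sp_Pstar (t : seq R) l a : (l < size t)%N -> Pstar_m (drop l t) a ->
  Pstar_m t (sp (take l t) a).
Proof.
move=> ls [sa Ha].
have sd : size (drop l t) = (size t - l)%N by rewrite size_drop.
case: a sa Ha => [|h r] sa Ha; first by move: sa; rewrite sd /=; lia.
have stl : size (take l t) = l by rewrite size_takel // ltnW.
split.
  by rewrite /sp size_cat size_splitn stl /=; move: sa; rewrite sd /=; lia.
move=> i it; rewrite /sp nth_cat size_splitn stl /=.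
case: ifPn => il.
  have H0 := Ha 0%N; rewrite sd subn_gt0 ls /= in H0.
  have := @Pstar_splitn R (take l t) 1 (nth 0 (drop l t) 0) h (H0 isT) i.
  rewrite stl => /(_ il).
  have -> : nth 1 (1 :: take l t) i = nth 1 (1 :: t) i.
    by move: il; case: (i) => [|i0] //= il; rewrite nth_take.
  have -> : nth (nth 0 (drop l t) 0) (rcons (take l t) (nth 0 (drop l t) 0)) i = nth 0 t i.
    rewrite nth_rcons stl; case: ltnP => il2.
      by rewrite nth_take // (set_nth_default 0) // size_take; case: ltnP.
    have -> : i = l by apply/eqP; rewrite eqn_leq il2 -ltnS il.
    by rewrite eqxx nth_drop addn0.
  by [].
have [j ij] : exists j, i = (l + j.+1)%N by exists (i - l.+1)%N; lia.
subst i.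
have jlt : (j.+1 < size (drop l t))%N by rewrite sd; lia.
have := Ha _ jlt.
rewrite /= !nth_drop.
have -> : (l + j.+1 - l.+1 = j)%N by lia.
by rewrite addnS.
Qed.

Lemma sp_size (t1 : seq R) a : (0 < size a)%N -> size (sp t1 a) = (size t1 + size a)%N.
Proof. by case: a => [|h r] //= _; rewrite size_cat size_splitn /=; lia. Qed.

Lemma sp_prod_take (t1 : seq R) a j : (0 < head 0%N a)%N -> (j < size a)%N ->
  (\prod_(e <- take (size t1 + j).+1 (sp t1 a)) e = \prod_(e <- take j.+1 a) e)%N.
Proof.
case: a => [|h r] //= h0 jlt.
rewrite /sp /= take_cat size_splitn ltnNge ltnS leq_addr /=.
have -> : ((size t1 + j).+1 - (size t1).+1 = j)%N by lia.
by rewrite big_cat /= prod_splitn // big_cons.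
Qed.

Lemma sp_prod (t1 : seq R) a : (0 < head 0%N a)%N -> (0 < size a)%N ->
  (\prod_(e <- sp t1 a) e = \prod_(e <- a) e)%N.
Proof.
case: a => [|h r] //= h0 _.
by rewrite /sp /= big_cat /= prod_splitn // big_cons.
Qed.

Lemma sp_inj (t1 : seq R) a b : (0 < head 0%N a)%N -> (0 < size a)%N ->
  (0 < head 0%N b)%N -> (0 < size b)%N -> sp t1 a = sp t1 b -> a = b.
Proof.
case: a => [|h r] //= h0 _; case: b => [|h' r'] //= h0' _.
rewrite /sp /= => E.
have E1 := congr1 (take (size t1).+1) E.
have E2 := congr1 (drop (size t1).+1) E.
rewrite !take_size_cat ?size_splitn // in E1.
rewrite !drop_size_cat ?size_splitn // in E2.
have := congr1 (fun s => \prod_(e <- s) e)%N E1.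
by rewrite /= !prod_splitn // => ->; rewrite E2.
Qed.
End S.

Section P1.
Variable R : realType.
Local Open Scope ereal_scope.

Definition F (a : seq nat) : \bar R := Lm R a * (((\prod_(e <- a) e)%:R)^-1)%:E.

Lemma F_ge0 a : 0 <= F a.
Proof. by apply: mule_ge0; [exact: vol_ge0 | rewrite lee_fin invr_ge0 ler0n]. Qed.

Lemma esumZ_le (I : set (seq nat)) (c : R) (f : seq nat -> \bar R) : (0 <= c)%R ->
  (forall x, 0 <= f x) ->
  \esum_(i in I) (c%:E * f i) <= c%:E * \esum_(i in I) f i.
Proof.
move=> c0 f0; apply: ge_ereal_sup => _ [X [finX XI]] <-.
rewrite -ge0_mule_fsumr //; apply: lee_wpmul2l; first by rewrite lee_fin.
by apply: esum_ge; exists X.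
Qed.

Lemma esum_sub (I J : set (seq nat)) (f : seq nat -> \bar R) : I `<=` J ->
  \esum_(i in I) f i <= \esum_(i in J) f i.
Proof.
move=> IJ; apply: ge_ereal_sup => _ [X [finX XI]] <-.
by apply: esum_ge; exists X => //; split => //; exact: subset_trans IJ.
Qed.

Lemma Lm_sp (t1 : seq R) a : (0 < head 0 a)%N -> (0 < size a)%N ->
  ((ln (2:R)) ^+ (size t1))%:E * Lm R a <= Lm R (sp t1 a).
Proof.
move=> h0 s0; rewrite /Lm sp_size // -vol_Pbox.
apply: vol_mono => x; apply: Lset_sub; first by rewrite sp_size.
by move=> j jlt; rewrite sp_prod_take.
Qed.

Lemma Pstar_m_head (s : seq R) a : (0 < size s)%N -> Pstar_m s a ->
  (0 < head 0 a)%N /\ (0 < size a)%N.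
Proof.
move=> s0 [sa Ha]; split; last by rewrite sa.
have := Ha 0%N s0; rewrite /Pstar /squarefree => /andP [/andP [+ _] _].
by case: a sa {Ha}.
Qed.

Lemma part1 (t : seq R) l : (l < size t)%N ->
  Sm (drop l t) <= ((ln (2:R)) ^- l)%:E * Sm t.
Proof.
move=> lt.
have s2 : (0 < size (drop l t))%N by rewrite size_drop subn_gt0.
have stl : size (take l t) = l by rewrite size_takel // ltnW.
set c := ((ln (2:R)) ^- l).
have c0 : (0 <= c)%R by rewrite /c invr_ge0 exprn_ge0 // ltW // ln2_gt0.
have cl : (c * (ln (2:R)) ^+ l = 1)%R.
  by rewrite /c mulVf // expf_neq0 // gt_eqF // ln2_gt0.
rewrite /Sm.
apply: (@le_trans _ _ (\esum_(a in Pstar_m (drop l t)) (c%:E * F (sp (take l t) a)))).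
  apply: le_esum => a Pa.
  have [h0 sa] := Pstar_m_head s2 Pa.
  rewrite /F sp_prod // muleA.
  apply: (@le_trans _ _ ((c%:E * (((ln (2:R)) ^+ l)%:E * Lm R a)) *
      (((\prod_(e <- a) e)%:R)^-1)%:E)).
    by rewrite muleA -EFinM cl mul1e.
  apply: lee_wpmul2r; first by rewrite lee_fin invr_ge0 ler0n.
  apply: lee_wpmul2l; first by rewrite lee_fin.
  by rewrite -{1}stl; exact: Lm_sp.
apply: le_trans (esumZ_le _ c0 (fun a => F_ge0 _)) _.
apply: lee_wpmul2l; first by rewrite lee_fin.
rewrite -(@reindex_esum R _ _ (Pstar_m (drop l t)) (sp (take l t) @` Pstar_m (drop l t))); last first.
  apply: inj_bij => a b /set_mem Pa /set_mem Pb.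
  have [ha sa] := Pstar_m_head s2 Pa.
  have [hb sb] := Pstar_m_head s2 Pb.
  exact: sp_inj.
apply: esum_sub => _ [a Pa <-].
exact: sp_Pstar.
Qed.
End P1.


Local Close Scope classical_set_scope.

Lemma sqfree_decomp n : (0 < n)%N -> exists s m, [/\ squarefree s, (0 < m)%N & n = (s * m ^ 2)%N].
Proof.
elim/ltn_ind: n => n IH n0.
case sq: (squarefree n); first by exists n, 1%N; rewrite muln1.
move: sq; rewrite /squarefree n0 /= => /negbT /allPn [p pn].
rewrite -ltnNge => lp.
have pp : prime p by move: pn; rewrite mem_primes => /andP [].
have dv : (p ^ 2 %| n)%N by rewrite pfactor_dvdn.
have p2 : (1 < p ^ 2)%N by rewrite (ltn_exp2l 0) // prime_gt1.
have n'0 : (0 < n %/ p ^ 2)%N by rewrite divn_gt0 ?expn_gt0 ?prime_gt0 // dvdn_leq.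
have [s [m [ss m0 E]]] := IH _ (ltn_Pdiv p2 n0) n'0.
exists s, (m * p)%N; split => //; first by rewrite muln_gt0 m0 prime_gt0.
by rewrite -(divnK dv) E expnMn mulnA.
Qed.

Section T.
Variable R : realType.

Lemma harm N : ln (N.+1%:R : R) <= \sum_(i < N.+1) (if (0 < i)%N then (i%:R : R)^-1 else 0).
Proof.
elim: N => [|N IH]; first by rewrite ln1 big_ord_recr big_ord0 /= add0r.
rewrite big_ord_recr /=.
have -> : (N.+2%:R : R) = N.+1%:R * (1 + (N.+1%:R)^-1).
  by rewrite mulrDr mulr1 mulfV // -natr1 addrC.
rewrite lnM ?posrE ?addr_gt0 ?invr_gt0 ?ltr0n //.
apply: lerD => //; apply: le_ln1Dx.
by apply: lt_le_trans (_ : -1 < 0) _; rewrite ?ltrN10 ?invr_ge0 ?ler0n.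
Qed.

Lemma sq_sum N : \sum_(i < N.+2) (if (0 < i)%N then ((i%:R : R) ^+ 2)^-1 else 0) <= 2 - (N.+1%:R)^-1.
Proof.
elim: N => [|N IH].
  by rewrite !big_ord_recr big_ord0 /= add0r expr1n invr1 add0r; lra.
rewrite big_ord_recr /=.
apply: le_trans (lerD IH (lexx _)) _.
have a : (0 : R) < N.+1%:R by rewrite ltr0n.
rewrite -[N.+2%:R]natr1 -[N.+1%:R]natr1 in a *.
set x := (N%:R : R) in a *.
have x0 : 0 <= x by rewrite /x ler0n.
rewrite -subr_ge0.
have -> : 2 - (x + 1 + 1)^-1 - (2 - (x + 1)^-1 + ((x + 1 + 1) ^+ 2)^-1) = 
   ((x+1)*(x+1+1)^+2)^-1 by field; rewrite -?natr1; lra.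
by rewrite invr_ge0 mulr_ge0 // ?exprn_ge0 //; lra.
Qed.

Lemma sq_sum2 N : \sum_(i < N.+1) (if (0 < i)%N then ((i%:R : R) ^+ 2)^-1 else 0) <= 2.
Proof.
case: N => [|N]; first by rewrite big_ord_recr big_ord0 /= add0r.
apply: le_trans (sq_sum N) _.
by rewrite lerBlDr lerDl invr_ge0 ler0n.
Qed.
End T.

Section T2.
Variable R : realType.

Lemma sqfree_sum N :
  \sum_(i < N.+1) (if (0 < i)%N then (i%:R : R)^-1 else 0) <=
  (\sum_(s < N.+1) (if squarefree s then (s%:R : R)^-1 else 0)) *
  (\sum_(m < N.+1) (if (0 < m)%N then ((m%:R : R) ^+ 2)^-1 else 0)).
Proof.
pose g (p : 'I_N.+1 * 'I_N.+1) : R :=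
  if squarefree p.1 && (0 < p.2)%N then (((p.1 * p.2 ^ 2)%N)%:R)^-1 else 0.
have g0 p : 0 <= g p by rewrite /g; case: ifP => // _; rewrite invr_ge0 ler0n.
have -> : (\sum_(s < N.+1) (if squarefree s then (s%:R : R)^-1 else 0)) *
  (\sum_(m < N.+1) (if (0 < m)%N then ((m%:R : R) ^+ 2)^-1 else 0)) = \sum_p g p.
  have -> : \sum_p g p = \sum_s \sum_m g (s, m) by rewrite pair_bigA; apply: eq_bigr => -[].
  rewrite big_distrl /=; apply: eq_bigr => s _.
  rewrite big_distrr /=; apply: eq_bigr => m _.
  rewrite /g /=; case: (squarefree s); case: (0 < m)%N; rewrite ?mul0r ?mulr0 //=.
  by rewrite natrM natrX [RHS]invfM.
pose phi := fun n : 'I_N.+1 => odflt (ord0, ord0)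
  [pick p : 'I_N.+1 * 'I_N.+1 | squarefree p.1 && (0 < p.2)%N && (p.1 * p.2 ^ 2 == n)%N].
have spec (n : 'I_N.+1) : (0 < n)%N ->
    squarefree (phi n).1 && (0 < (phi n).2)%N && ((phi n).1 * (phi n).2 ^ 2 == n)%N.
  move=> n0; rewrite /phi; case: pickP => [p Hp | H] //=; exfalso.
  have [s [m [ss m0 E]]] := sqfree_decomp n0.
  have s0 : (0 < s)%N by move: ss; rewrite /squarefree => /andP [].
  have sl : (s < N.+1)%N.
    by apply: leq_ltn_trans (ltn_ord n); rewrite E; nia.
  have ml : (m < N.+1)%N.
    by apply: leq_ltn_trans (ltn_ord n); rewrite E; nia.
  by have := H (Ordinal sl, Ordinal ml); rewrite /= ss m0 -E eqxx.
pose A := [set i : 'I_N.+1 | (0 < i)%N].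
have inj : {in A &, injective phi}.
  move=> a b; rewrite !inE => a0 b0 E.
  have /andP [_ /eqP Ea] := spec a a0.
  have /andP [_ /eqP Eb] := spec b b0.
  by apply: val_inj; rewrite /= -Ea -Eb E.
rewrite (eq_bigr (fun i => if i \in A then g (phi i) else 0)); last first.
  move=> i _; rewrite inE; case: ifP => i0 //.
  have /andP [/andP [a b] /eqP c] := spec i i0.
  by rewrite /g a b c.
rewrite -big_mkcond -(big_imset _ inj) /=.
rewrite [X in _ <= X](bigID (fun p => p \in [set phi x | x in A])) /=.
by rewrite lerDl sumr_ge0.
Qed.

Lemma key N : ln (N.+1%:R : R) <= 2 * \sum_(s < N.+1) (if squarefree s then (s%:R : R)^-1 else 0).
Proof.
have Q0 : 0 <= \sum_(s < N.+1) (if squarefree s then (s%:R : R)^-1 else 0).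
  by apply: sumr_ge0 => i _; case: ifP => // _; rewrite invr_ge0 ler0n.
have h1 := harm R N; have h2 := sqfree_sum N; have h3 := @sq_sum2 R N.
apply: (le_trans h1); apply: (le_trans h2).
by rewrite mulrC; apply: ler_wpM2r.
Qed.
End T2.

Local Open Scope classical_set_scope.

Section P2.
Variable R : realType.

Lemma Lm_single i : ((ln (2:R))%:E <= Lm R [:: i])%E.
Proof.
have L0 : Lset (R:=R) [::] [::].
  split => //; exists [::]; split => //.
have -> : (ln (2:R))%:E = (((ln (2:R)) ^+ 1)%:E * vol 0 (Lset (R:=R) [::]))%E.
  by rewrite /= expr1; case: pselect => [?|/(_ L0) //]; rewrite mule1.
rewrite -(vol_Pbox 1 0) /Lm.
by apply: vol_mono => v; apply: Lset_sub.
Qed.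

Lemma Sm_single (x : R) : 1 <= x -> ((ln (2:R) / 2 * ln x)%:E <= Sm [:: x])%E.
Proof.
move=> x1.
set N := Num.truncn x.
have x0 : 0 <= x by apply: le_trans x1; exact: ler01.
have Nx : (N%:R : R) <= x by rewrite truncn_le.
have xN : x < N.+1%:R by rewrite -truncn_le_nat.
set Q := \sum_(s < N.+1) (if squarefree s then (s%:R : R)^-1 else 0).
have l2 := @ln2_gt0 R.
have A : ln (2:R) / 2 * ln x <= ln 2 * Q.
  have h1 : ln x <= ln (N.+1%:R : R).
    by rewrite ler_ln ?posrE ?ltr0n // ?ltW //; apply: lt_le_trans x1; exact: ltr01.
  have h2 := key R N.
  rewrite -/Q in h2.
  have : ln x <= 2 * Q by exact: le_trans h1 h2.
  by move=> h; nra.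
apply: le_trans (_ : ((ln 2 * Q)%:E <= _)%E); first by rewrite lee_fin.
rewrite /Sm.
apply: le_trans (esum_sub _ (_ : (fun s => [:: s]) @` [set s | Pstar 1 x s] `<=` Pstar_m [:: x])); last first.
  move=> _ [s Ps <-]; split => // -[|i] //= _.
rewrite (@reindex_esum R _ _ [set s | Pstar 1 x s] _ (fun s : nat => [:: s])); last first.
  by apply: inj_bij => a b _ _ [].
rewrite -nneseries_esum; last by move=> n _; exact: F_ge0.
apply: le_trans (nneseries_lim_ge N.+1 _); last by move=> n _ _; exact: F_ge0.
rewrite big_mkord big_mkcond /= /Q mulr_sumr -sumEFin.
apply: lee_sum => i _.
case: ifP => sq; last by rewrite mulr0; case: ifP => // _; exact: F_ge0.
have P : Pstar 1 x i.
  rewrite /Pstar sq /=; apply/allP => p pi.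
  have pp : prime p by move: pi; rewrite mem_primes => /andP [].
  have i0 : (0 < i)%N by move: sq; rewrite /squarefree => /andP [].
  have pdi : (p <= i)%N by apply: dvdn_leq i0 _; move: pi; rewrite mem_primes => /and3P [].
  rewrite ltr1n prime_gt1 //=.
  apply: le_trans Nx; rewrite ler_nat; apply: leq_trans pdi _.
  by rewrite -ltnS ltn_ord.
rewrite P /F big_seq1 EFinM.
apply: lee_wpmul2r; first by rewrite lee_fin invr_ge0 ler0n.
exact: Lm_single.
Qed.
End P2.

Local Close Scope classical_set_scope.

Theorem lemma3p8 (R : realType) :
  (forall (k l : nat) (t : seq R),
     size t = k -> (1 <= l <= k - 1)%N ->
     all (fun x => 3 <= x) t -> sorted <=%R t ->
     (Sm (drop l t) <= ((ln (2 : R)) ^- l)%:E * Sm t)%E)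
  /\
  (forall k : nat, (2 <= k)%N ->
     exists C : R, 0 < C /\
       forall t : seq R, size t = k ->
         all (fun x => 3 <= x) t -> sorted <=%R t ->
         ((C * ln (last 0 t))%:E <= Sm t)%E).
Proof.
split.
  move=> k l t st /andP [l1 lk] _ _; apply: part1; rewrite st; lia.
move=> k k2.
have l2 := @ln2_gt0 R.
exists ((ln (2:R)) ^+ (k - 1) * (ln 2 / 2)); split.
  by apply: mulr_gt0; [exact: exprn_gt0 | apply: divr_gt0].
move=> t st /allP t3 _.
have H := @part1 R t (k - 1) ltac:(rewrite st; lia).
case/lastP: t st t3 H => [|s y] st t3 H; first by move: k2; rewrite -st.
move: st; rewrite size_rcons => st.
have E : (k - 1 = size s)%N by lia.
rewrite E -cats1 drop_size_cat // cats1 in H; rewrite E last_rcons.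
have y3 : 3 <= y by apply: t3; rewrite mem_rcons mem_head.
have := Sm_single (_ : 1 <= y); move=> /(_ ltac:(lra)) Hy.
rewrite -mulrA EFinM.
apply: le_trans (lee_wpmul2l _ Hy) _; first by rewrite lee_fin exprn_ge0 // ltW.
apply: le_trans (lee_wpmul2l _ H) _; first by rewrite lee_fin exprn_ge0 // ltW.
by rewrite muleA -EFinM mulfV ?mul1e // expf_neq0 // gt_eqF.
Qed.
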